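(* With the setup below, the sequence $x_1,\ldots,x_p,y_1,\ldots,y_q$ is a regular sequence on the $R$-module $\widetilde{F}\cong R/\big(J+(\widetilde{\vec{x}}\widetilde{\vec{y}})+J'\big)$.
   Context: Let $k$ be a field, $\vec{x}=x_1,\ldots,x_n$, $\vec{y}=y_1,\ldots,y_{n'}$, $R=k[[\vec{x},\vec{y}]]$, $0\le p\le n$, $0\le q\le n'$. Let $J$ be an ideal generated by power series in $x_{p+1},\ldots,x_n$ only with $J\subseteq(x_{p+1},\ldots,x_n)^2$, and $J'$ an ideal generated by power series in $y_{q+1},\ldots,y_{n'}$ only with $J'\subseteq(y_{q+1},\ldots,y_{n'})^2$ (viewed in $R$). Let $\widetilde{\vec{x}}=x_{p+1},\ldots,x_n$, $\widetilde{\vec{y}}=y_{q+1},\ldots,y_{n'}$, $W=R/(\widetilde{\vec{x}},\widetilde{\vec{y}})$, and $\widetilde{F}=\frac{R}{J+(\widetilde{\vec{y}})}\times_W\frac{R}{(\widetilde{\vec{x}})+J'}$, the fiber product over the natural surjections onto $W$; $(\widetilde{\vec{x}}\widetilde{\vec{y}})$ is the ideal generated by all $x_iy_j$ with $p<i\le n$, $q<j\le n'$. *)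

(* Defs.v *)
From Stdlib Require List.
From mathcomp Require Import all_boot all_algebra.
Set Implicit Arguments. Unset Strict Implicit. Unset Printing Implicit Defensive.
Import GRing.Theory.
Local Open Scope ring_scope.

Section PS.
Variables (k : fieldType) (N : nat).

Definition mono := 'I_N -> nat.
Definition ps := mono -> k.

Definition ps0 : ps := fun _ => 0.
Definition ps1 : ps := fun m => if [forall i, m i == 0%N] then 1 else 0.
Definition psadd (f g : ps) : ps := fun m => f m + g m.
Definition psopp (f : ps) : ps := fun m => - f m.
(* Cauchy product: (f g)_m = sum_{a <= m} f_a g_{m-a}; the exponents a <= m
   are enumerated as finite functions bounded by the total degree of m. *)
Definition psmul (f g : ps) : ps := fun m =>
  \sum_(a : {ffun 'I_N -> 'I_(\sum_(i < N) m i).+1} | [forall i, (a i <= m i)%N])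
     f (fun i => nat_of_ord (a i)) * g (fun i => (m i - a i)%N).
Definition psX (i : 'I_N) : ps := fun m => if [forall j, m j == (j == i)] then 1 else 0.

Definition pssum (l : seq ps) : ps := foldr psadd ps0 l.

Definition ideal_gen (S : ps -> Prop) : ps -> Prop := fun f =>
  exists l : seq (ps * ps), (forall c, List.In c l -> S c.2) /\
    f = pssum [seq psmul c.1 c.2 | c <- l].

Definition ideal_add (I1 I2 : ps -> Prop) : ps -> Prop := fun f =>
  exists a b, I1 a /\ I2 b /\ f = psadd a b.

Definition var_ideal (A : pred 'I_N) : ps -> Prop :=
  ideal_gen (fun f => exists2 i, A i & f = psX i).

Definition prod_ideal (A B : pred 'I_N) : ps -> Prop :=
  ideal_gen (fun f => exists i j, [/\ A i, B j & f = psmul (psX i) (psX j)]).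

Definition only_vars (A : pred 'I_N) (f : ps) : Prop :=
  forall m : mono, f m != 0 -> forall i, ~~ A i -> m i = 0%N.

(* ---- R-modules given as  M / K  with  K <= M <= R x R  ---- *)
Definition pair := (ps * ps)%type.
Definition padd (u v : pair) : pair := (psadd u.1 v.1, psadd u.2 v.2).
Definition pscale (r : ps) (u : pair) : pair := (psmul r u.1, psmul r u.2).
Definition pzero : pair := (ps0, ps0).

(* u lies in K + (zs) M *)
Definition in_sub (M K : pair -> Prop) (zs : seq ps) (u : pair) : Prop :=
  exists w, K w /\ exists vs : seq pair,
    size vs = size zs /\ (forall v, List.In v vs -> M v) /\
    u = padd w (foldr padd pzero [seq pscale zv.1 zv.2 | zv <- zip zs vs]).

Definition regular_seq_mod (M K : pair -> Prop) (zs : seq ps) : Prop :=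
  (forall i, (i < size zs)%N -> forall u, M u ->
     in_sub M K (take i zs) (pscale (nth ps0 zs i) u) ->
     in_sub M K (take i zs) u)
  /\ (exists u, M u /\ ~ in_sub M K zs u).

End PS.

(* Main.v *)
Require Import Defs.
From mathcomp Require Import all_boot all_algebra.
From mathcomp Require Import zify.
From Stdlib Require Import FunctionalExtensionality.
Local Open Scope ring_scope.

Set Implicit Arguments. Unset Strict Implicit. Unset Printing Implicit Defensive.
Import GRing.Theory.

Notation vA a := (fun i => nat_of_ord (a i)).

Section Aux.
Variables (k : fieldType) (N : nat).

Definition Dg (m : mono N) := (\sum_(i < N) m i)%N.
Definition lem (a m : mono N) : bool := [forall i, (a i <= m i)%N].
Definition toB (m : mono N) (x : mono N) : {ffun 'I_N -> 'I_(Dg m).+1} :=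
  [ffun i => inord (x i)].
Definition z0 : mono N := fun _ => 0%N.

Lemma le_Dg m i : (m i <= Dg m)%N.
Proof. by rewrite /Dg (bigD1 i) //= leq_addr. Qed.

Lemma toBK m x : lem x m -> vA (toB m x) = x.
Proof.
move=> H; apply: functional_extensionality => i.
rewrite ffunE inordK // ltnS; exact: leq_trans (forallP H i) (le_Dg m i).
Qed.

Lemma valK m (b : {ffun 'I_N -> 'I_(Dg m).+1}) : toB m (vA b) = b.
Proof. by apply/ffunP => i; rewrite ffunE; apply: val_inj; rewrite /= inordK. Qed.

Lemma psmulE (f g : ps k N) m : psmul f g m =
  \sum_(a : {ffun 'I_N -> 'I_(Dg m).+1} | lem (vA a) m)
     f (vA a) * g (fun i => (m i - vA a i)%N).
Proof. by []. Qed.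

Lemma bsum_eq m m' (F G : mono N -> k) (phi psi : mono N -> mono N) :
  (forall b, lem b m' -> lem (phi b) m /\ F (phi b) = G b) ->
  (forall a, lem a m -> F a != 0 -> lem (psi a) m' /\ phi (psi a) = a) ->
  (forall b, lem b m' -> psi (phi b) = b) ->
  \sum_(a : {ffun 'I_N -> 'I_(Dg m).+1} | lem (vA a) m) F (vA a) =
  \sum_(b : {ffun 'I_N -> 'I_(Dg m').+1} | lem (vA b) m') G (vA b).
Proof.
move=> H1 H2 H3.
rewrite (bigID (fun a : {ffun 'I_N -> 'I_(Dg m).+1} => F (vA a) != 0)) /= [X in _ + X = _]big1 ?addr0; last first.
  by move=> a /andP[_ /negPn/eqP].
rewrite [RHS](bigID (fun b : {ffun 'I_N -> 'I_(Dg m').+1} => G (vA b) != 0)) /= [X in _ = _ + X]big1 ?addr0;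
  last by move=> a /andP[_ /negPn/eqP].
rewrite (@reindex_onto _ _ _ _ _ (fun b : {ffun 'I_N -> 'I_(Dg m').+1} => toB m (phi (vA b)))
   (fun a : {ffun 'I_N -> 'I_(Dg m).+1} => toB m' (psi (vA a)))); last first.
  move=> a /andP[la Fa]; have [l1 e1] := H2 _ la Fa.
  by rewrite (toBK l1) e1 valK.
apply: eq_big.
  move=> b; case lb: (lem (vA b) m').
    have [l1 e1] := H1 _ lb.
    by rewrite (toBK l1) l1 e1 (H3 _ lb) valK eqxx andbT.
  apply/negbTE/negP => /andP[/andP[la Fa] /eqP eb].
  have [l2 _] := H2 _ la Fa.
  by rewrite -eb (toBK l2) l2 in lb.
move=> b /andP[/andP[la Fa] /eqP eb].
have [l2 _] := H2 _ la Fa.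
have lb : lem (vA b) m' by rewrite -eb (toBK l2).
have [l1 e1] := H1 _ lb.
by rewrite (toBK l1) e1.
Qed.

Lemma sum_at0 (F : mono N -> k) :
  \sum_(b : {ffun 'I_N -> 'I_(Dg z0).+1} | lem (vA b) z0) F (vA b) = F z0.
Proof.
have lz : lem z0 z0 by apply/forallP.
rewrite (bigD1 (toB z0 z0)) /=; last by rewrite toBK.
rewrite toBK // big1 ?addr0 // => b /andP[lb nb].
move/eqP: nb; case; apply/ffunP => j; apply: val_inj.
rewrite /toB ffunE /= inordK //=; apply/eqP; rewrite -leqn0; exact: (forallP lb j).
Qed.

Lemma psmul_0 (f g : ps k N) : psmul f g z0 = f z0 * g z0.
Proof.
rewrite psmulE.
have -> : g z0 = g (fun i => (z0 i - z0 i)%N) by [].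
exact: (sum_at0 (fun x => f x * g (fun i => (z0 i - x i)%N))).
Qed.

Lemma In_map_inv (A B : Type) (f : A -> B) (l : seq A) y :
  List.In y (map f l) -> exists x, List.In x l /\ y = f x.
Proof.
elim: l => //= a l IH [<-|h]; first by exists a; split; [left|].
by have [x [h1 h2]] := IH h; exists x; split; [right|].
Qed.

Lemma In_mem (T : eqType) (x : T) (l : seq T) : List.In x l -> x \in l.
Proof.
elim: l => //= a l IH [->|h]; first by rewrite in_cons eqxx.
by rewrite in_cons IH ?orbT.
Qed.

Lemma psX_0 j : psX k j z0 = 0.
Proof.
rewrite /psX; case: ifP => // /forallP/(_ j)/eqP; by rewrite eqxx.
Qed.

Lemma ideal_0 (S : ps k N -> Prop) f :
  (forall g, S g -> g z0 = 0) -> ideal_gen S f -> f z0 = 0.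
Proof.
move=> HS [l [Hl ->]]; elim: l Hl => [|c l IH] Hl //=.
rewrite /pssum /= /psadd psmul_0 (HS _ (Hl c (or_introl erefl))) mulr0 add0r.
exact: IH (fun c' h => Hl c' (or_intror h)).
Qed.

Lemma foldr_0 (zs : seq (ps k N)) vs :
  (forall z, List.In z zs -> z z0 = 0) ->
  (foldr (@padd k N) (@pzero k N) [seq pscale zv.1 zv.2 | zv <- zip zs vs]).1 z0 = 0.
Proof.
elim: zs vs => [|z zs IH] [|v vs] Hz //=.
rewrite /psadd psmul_0 (Hz z (or_introl erefl)) mul0r add0r.
exact: IH (fun c' h => Hz c' (or_intror h)).
Qed.

Variable i0 : 'I_N.
Definition shift (x : mono N) : mono N := fun j => (x j + (j == i0))%N.
Definition unshift (x : mono N) : mono N := fun j => (x j - (j == i0))%N.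
Definition T (f : ps k N) : ps k N := fun m => f (shift m).
Definition free (g : ps k N) := forall m, g m != 0 -> m i0 = 0%N.
Definition Tp (u : pair k N) : pair k N := (T u.1, T u.2).

Lemma T_mulr r g : free g -> T (psmul r g) = psmul (T r) g.
Proof.
move=> fg; apply: functional_extensionality => m.
rewrite /T !psmulE.
apply: (@bsum_eq (shift m) m (fun x => r x * g (fun i => (shift m i - x i)%N))
   (fun x => r (shift x) * g (fun i => (m i - x i)%N)) shift unshift).
- move=> b lb; split.
    by apply/forallP => j; rewrite /shift leq_add2r (forallP lb j).
  congr (_ * g _); apply: functional_extensionality => j; by rewrite /shift subnDr.
- move=> a la; rewrite mulf_eq0 negb_or => /andP[_ ga].
  have := fg _ ga; move/eqP; rewrite subn_eq0 /shift eqxx => hi.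
  split.
    apply/forallP => j; have := forallP la j; rewrite /unshift /shift.
    case: eqP => [->|_] /=; lia.
  apply: functional_extensionality => j; rewrite /shift /unshift.
  case: eqP => [->|_] /=; lia.
- move=> b _; apply: functional_extensionality => j; by rewrite /unshift /shift addnK.
Qed.

Lemma T_mull g r : free g -> T (psmul g r) = psmul g (T r).
Proof.
move=> fg; apply: functional_extensionality => m.
rewrite /T !psmulE.
apply: (@bsum_eq (shift m) m (fun x => g x * r (fun i => (shift m i - x i)%N))
   (fun x => g x * r (shift (fun i => (m i - x i)%N))) id id).
- move=> b lb; split.
    by apply/forallP => j; have := forallP lb j; rewrite /shift; lia.
  congr (_ * r _); apply: functional_extensionality => j; have := forallP lb j.
  rewrite /shift; lia.
- move=> a la; rewrite mulf_eq0 negb_or => /andP[ga _].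
  have h0 := fg _ ga; split => //.
  apply/forallP => j; have := forallP la j; rewrite /shift.
  case: eqP => [->|_] /=; lia.
- by [].
Qed.

Lemma T_X u : T (psmul (psX k i0) u) = u.
Proof.
apply: functional_extensionality => m.
rewrite /T psmulE.
pose e : mono N := fun j => nat_of_bool (j == i0).
transitivity (\sum_(b : {ffun 'I_N -> 'I_(Dg z0).+1} | lem (vA b) z0)
   (fun _ : mono N => u m) (vA b)); last by apply: (sum_at0 (fun _ : mono N => u m)).
apply: (@bsum_eq (shift m) z0
   (fun x => psX k i0 x * u (fun i => (shift m i - x i)%N))
   (fun _ => u m) (fun _ => e) (fun _ => z0)).
- move=> b _; split.
    by apply/forallP => j; rewrite /e /shift leq_addl.
  have -> : psX k i0 e = 1.
    by rewrite /psX; have -> : [forall j, e j == (j == i0)] by apply/forallP.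
  rewrite mul1r; congr u; apply: functional_extensionality => j.
  by rewrite /shift /e addnK.
- move=> a _; rewrite mulf_eq0 negb_or => /andP[ha _]; split.
    by apply/forallP.
  move: ha; rewrite /psX; case: ifP => [/forallP H _|_]; last by rewrite eqxx.
  apply: functional_extensionality => j; exact/esym/eqP/H.
- move=> b lb; apply: functional_extensionality => j.
  by apply/esym/eqP; rewrite -leqn0 (forallP lb j).
Qed.


Lemma ideal_T (S : ps k N -> Prop) f :
  (forall g, S g -> free g) -> ideal_gen S f -> ideal_gen S (T f).
Proof.
move=> HS [l [Hl ->]]; elim: l Hl => [|c l IH] Hl.
  by exists [::]; split.
have [l' [Hl' E]] := IH (fun c' h => Hl c' (or_intror h)).
exists ((T c.1, c.2) :: l'); split.
  by move=> c' [<-|h] /=; [exact: Hl (or_introl erefl) | exact: Hl'].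
have -> : T (pssum [seq psmul c0.1 c0.2 | c0 <- c :: l]) =
   psadd (T (psmul c.1 c.2)) (T (pssum [seq psmul c0.1 c0.2 | c0 <- l])) by [].
by rewrite E T_mulr //; apply: HS; apply: Hl; left.
Qed.

Lemma add_T (I1 I2 : ps k N -> Prop) f :
  (forall f, I1 f -> I1 (T f)) -> (forall f, I2 f -> I2 (T f)) ->
  ideal_add I1 I2 f -> ideal_add I1 I2 (T f).
Proof.
move=> h1 h2 [a [b [ha [hb ->]]]]; exists (T a), (T b); split; [exact: h1|split; [exact: h2|by []]].
Qed.

Lemma free_X j : j != i0 -> free (psX k j).
Proof.
move=> ne m; rewrite /psX; case: ifP => [/forallP/(_ i0)/eqP -> _|_]; last by rewrite eqxx.
by rewrite eq_sym (negbTE ne).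
Qed.

Lemma var_T (A : pred 'I_N) f : ~~ A i0 -> var_ideal A f -> var_ideal A (T f).
Proof.
move=> nA; apply: ideal_T => g [j Aj ->]; apply: free_X.
by apply/eqP => e; move: Aj; rewrite e (negbTE nA).
Qed.

Lemma free_only (A : pred 'I_N) g : ~~ A i0 -> only_vars A g -> free g.
Proof. by move=> nA H m gm; exact: H m gm i0 nA. Qed.

Lemma foldr_T (zs : seq (ps k N)) vs : (forall z, List.In z zs -> free z) ->
  Tp (foldr (@padd k N) (@pzero k N) [seq pscale zv.1 zv.2 | zv <- zip zs vs]) =
  foldr (@padd k N) (@pzero k N) [seq pscale zv.1 zv.2 | zv <- zip zs (map Tp vs)].
Proof.
elim: zs vs => [|z zs IH] vs Hz; first by case: vs.
case: vs => [|v vs]; first by [].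
have fz : free z by apply: Hz; left.
have IH' := IH vs (fun z' h => Hz z' (or_intror h)).
rewrite /= -IH'.
have E : forall A B, Tp (padd A B) = padd (Tp A) (Tp B) by [].
rewrite E; congr padd.
rewrite /Tp /pscale /=; congr (_, _); exact: T_mull.
Qed.

Lemma in_sub_T (M K : pair k N -> Prop) zs u :
  (forall v, M v -> M (Tp v)) -> (forall v, K v -> K (Tp v)) ->
  (forall z, List.In z zs -> free z) -> in_sub M K zs u -> in_sub M K zs (Tp u).
Proof.
move=> HM HK Hz [w [Kw [vs [sz [Mv ->]]]]].
exists (Tp w); split; first exact: HK.
exists (map Tp vs); split; first by rewrite size_map.
split.
  by move=> v hv; have [v' [h ->]] := In_map_inv hv; apply: HM; apply: Mv.
by rewrite -foldr_T.
Qed.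

Lemma Tp_X u : Tp (pscale (psX k i0) u) = u.
Proof. by case: u => a b; rewrite /Tp /pscale /= !T_X. Qed.

End Aux.

Theorem lemma3p4 (k : fieldType) (n n' p q : nat)
  (hp : (p <= n)%N) (hq : (q <= n')%N)
  (GJ GJ' : ps k (n + n') -> Prop) :
  let xt : pred 'I_(n + n') := fun i => (p <= i < n)%N in
  let yt : pred 'I_(n + n') := fun i => (n + q <= i)%N in
  (forall g, GJ g -> only_vars xt g) ->
  (forall g, GJ g -> prod_ideal xt xt g) ->
  (forall g, GJ' g -> only_vars yt g) ->
  (forall g, GJ' g -> prod_ideal yt yt g) ->
  let J := ideal_gen GJ in
  let J' := ideal_gen GJ' in
  let I1 := ideal_add J (var_ideal yt) in
  let I2 := ideal_add (var_ideal xt) J' in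
  let M := fun u : pair k (n + n') =>
    var_ideal (fun i => xt i || yt i) (psadd u.1 (psopp u.2)) in
  let K := fun u : pair k (n + n') => I1 u.1 /\ I2 u.2 in
  let zs := map (@psX k (n + n'))
     (filter (fun i : 'I_(n + n') => (i < p)%N || (n <= i < n + q)%N)
        (enum 'I_(n + n'))) in
  regular_seq_mod M K zs.
Proof.
move=> xt yt HJ1 HJ2 HJ'1 HJ'2 J J' I1 I2 M K zs.
split.
- move=> i hi u Mu Hin.
  pose s := filter (fun i : 'I_(n + n') => (i < p)%N || (n <= i < n + q)%N) (enum 'I_(n + n')).
  have zsE : zs = map (@psX k (n + n')) s by [].
  have his : (i < size s)%N by move: hi; rewrite zsE size_map.
  have hN : (i < n + n')%N.
    by apply: (leq_trans his); rewrite size_filter (leq_trans (count_size _ _)) // size_enum_ord.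
  pose x0 := Ordinal hN.
  set i0 := nth x0 s i.
  have nthz : nth (@ps0 k (n + n')) zs i = psX k i0 by rewrite zsE (nth_map x0).
  have takez : take i zs = map (@psX k (n + n')) (take i s) by rewrite zsE map_take.
  have i0s : i0 \in s := mem_nth x0 his.
  have notin : i0 \notin take i s.
    have us : uniq s by rewrite filter_uniq // enum_uniq.
    move: us; rewrite -{1}(cat_take_drop i s) cat_uniq => /and3P[_ hd _].
    apply/negP => ht; move/hasP: hd; apply; exists i0 => //.
    have -> : i0 = nth x0 (drop i s) 0 by rewrite nth_drop addn0.
    by rewrite mem_nth // size_drop subn_gt0.
  have pi0 : ((i0 < p)%N || (n <= i0 < n + q)%N).
    by move: i0s; rewrite mem_filter => /andP[].
  have nxt : ~~ (xt i0 || yt i0) by move: pi0; rewrite /xt /yt; lia.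
  have nx : ~~ xt i0 by move: nxt; rewrite negb_or => /andP[].
  have ny : ~~ yt i0 by move: nxt; rewrite negb_or => /andP[].
  rewrite nthz in Hin.
  have := @in_sub_T k _ i0 M K (take i zs) _ _ _ _ Hin.
  rewrite Tp_X; apply.
  + by move=> v Mv; exact: (var_T nxt Mv).
  + move=> v [h1 h2]; split.
      apply: add_T h1 => f hf; last exact: var_T.
      apply: ideal_T hf => g hg; exact: free_only nx (HJ1 g hg).
    apply: add_T h2 => f hf; first exact: var_T.
    apply: ideal_T hf => g hg; exact: free_only ny (HJ'1 g hg).
  + rewrite takez => z hz; have [j [hj ->]] := In_map_inv hz; apply: free_X.
    by apply/eqP => e; move: notin; rewrite -e (In_mem hj).
- exists (@ps1 k (n + n'), @ps1 k (n + n')); split.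
    exists [::]; split => //=.
    by apply: functional_extensionality => m; rewrite /psadd /psopp subrr.
  move=> [w [[h1 h2] [vs [_ [_ E]]]]].
  have E1 : @ps1 k (n + n') (@z0 (n + n')) = w.1 (@z0 (n + n')) +
     (foldr (@padd k (n + n')) (@pzero k (n + n')) [seq pscale zv.1 zv.2 | zv <- zip zs vs]).1 (@z0 (n + n')).
    exact: (congr1 (fun u => u.1 (@z0 (n + n'))) E).
  move: E1; rewrite foldr_0; last first.
    by move=> z hz; have [j [_ ->]] := In_map_inv hz; exact: psX_0.
  have -> : w.1 (@z0 (n + n')) = 0.
    case: h1 => [a [b [ha [hb ->]]]]; rewrite /psadd.
    rewrite (ideal_0 _ hb); last by move=> g [j _ ->]; exact: psX_0.
    rewrite (ideal_0 _ ha) ?addr0 // => g hg.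
    apply: ideal_0 (HJ2 g hg) => g' [i' [j' [_ _ ->]]].
    by rewrite psmul_0 psX_0 mul0r.
  rewrite addr0 /ps1; case: ifP => [_|/negP []]; last by apply/forallP.
  by move/eqP; rewrite oner_eq0.
Qed.
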